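(* Let $R$ be an idempotent semiring finitely generated by a finite set $R_0$, let $B$ be an $R$-semimodule finitely generated by a finite set $B_0$, and let $n\ge2$. Let $\alpha:\Omega_n^*\to(R,\cdot,1)$ be a monoid morphism such that for some $b_0,b_1\in B$ and all $w\in\Omega_n^*$: $\alpha(w)\cdot b_0\ge b_1$ iff $w\in\mathcal D_n$. Suppose moreover that $b_1$ satisfies: for all $c_1,c_2\in B$, if $c_1+c_2\ge b_1$ then $c_1\ge b_1$ or $c_2\ge b_1$. Then for every context-free language $\mathcal L\subseteq A^*$ there exist a weighted $\mathbb T_R$-automaton $M$ with output semimodule $B$ and a state $x_0$ such that $\mathcal L=\{w\in A^*\mid \llbracket x_0\rrbracket_M(w)\ge b_1\}$.
   Context: $A$ is a finite input alphabet. For a semiring $R$, the semimodule monad $\mathbb T_R$ sends $X$ to the free left $R$-semimodule on $X$ (finitely supported maps $X\to R$, i.e. formal sums $r_1x_1+\dots+r_kx_k$); its algebras are left $R$-semimodules. If $R$ is idempotent ($1+1=1$), a semimodule $B$ is partially ordered by $b\le c$ iff $b+c=c$. $\Omega_n=\{(_1,)_1,\dots,(_n,)_n\}$ and $\mathcal D_n\subseteq\Omega_n^*$ is the Dyck language of balanced parenthesis words. A weighted $\mathbb T_R$-automaton consists of a finite set $X$ and maps $o:X\to B$, $t:A\times X\to\mathbb T_R X$; its trace semantics $\llbracket x\rrbracket_M:A^*\to B$ is $\llbracket x\rrbracket_M(w)=o(\partial_w(\eta(x)))$ where $\mathbb T_RX$ is made an $L$-coalgebra ($LY=B\times Y^A$)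 by the unique semimodule morphism $\mathbb T_RX\to B\times(\mathbb T_RX)^A$ extending $x\mapsto(o(x),\lambda a.t(a,x))$; explicitly $\llbracket x\rrbracket_M(\epsilon)=o(x)$ and $\llbracket x\rrbracket_M(au)=\sum_y t(a,x)(y)\cdot\llbracket y\rrbracket_M(u)$. *)

(* Defs.v *)
From HB Require Import structures.
From mathcomp Require Import all_boot all_order all_algebra.
Set Implicit Arguments. Unset Strict Implicit. Unset Printing Implicit Defensive.
Import GRing.Theory.
Local Open Scope ring_scope.

Definition idempotent_sr (R : pzSemiRingType) : Prop := (1 + 1 : R) = 1.

Inductive sr_gen (R : pzSemiRingType) (R0 : seq R) : R -> Prop :=
| sr_gen_base r : r \in R0 -> sr_gen R0 r
| sr_gen_0 : sr_gen R0 0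
| sr_gen_1 : sr_gen R0 1
| sr_gen_add r s : sr_gen R0 r -> sr_gen R0 s -> sr_gen R0 (r + s)
| sr_gen_mul r s : sr_gen R0 r -> sr_gen R0 s -> sr_gen R0 (r * s).

Definition sr_fin_gen (R : pzSemiRingType) (R0 : seq R) : Prop :=
  forall r : R, sr_gen R0 r.

Definition smod_fin_gen (R : pzSemiRingType) (B : lSemiModType R) (B0 : seq B) : Prop :=
  forall b : B, exists f : B -> R, b = \sum_(c <- B0) f c *: c.

Definition sle (R : pzSemiRingType) (B : lSemiModType R) (b c : B) : Prop := b + c = c.

(* Omega_n : (i, true) = "(_i", (i, false) = ")_i" *)
Definition paren (n : nat) : finType := ('I_n * bool)%type.

Inductive dyck (n : nat) : seq (paren n) -> Prop :=
| dyck_nil : dyck [::]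
| dyck_wrap (i : 'I_n) (w : seq (paren n)) :
    dyck w -> dyck ((i, true) :: rcons w (i, false))
| dyck_cat u v : dyck u -> dyck v -> dyck (u ++ v).

Definition monoid_morph (R : pzSemiRingType) (n : nat) (alpha : seq (paren n) -> R) : Prop :=
  alpha [::] = 1 /\ forall u v, alpha (u ++ v) = alpha u * alpha v.

(* Trace semantics of a weighted T_R-automaton with state set X, output
   o : X -> B and transitions t a x : X -> R (an element of T_R X). *)
Fixpoint wsem (R : pzSemiRingType) (B : lSemiModType R) (A X : finType)
  (o : X -> B) (t : A -> X -> X -> R) (x : X) (w : seq A) : B :=
  match w with
  | [::] => o x
  | a :: u => \sum_(y : X) t a x y *: wsem o t y u
  end.

Inductive cf_sym (N A : finType) (P : seq (N * seq (N + A)%type))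
  : (N + A)%type -> seq A -> Prop :=
| cf_term (a : A) : cf_sym P (inr a) [:: a]
| cf_nonterm (X : N) (rhs : seq (N + A)%type) (w : seq A) :
    (X, rhs) \in P -> cf_seq P rhs w -> cf_sym P (inl X) w
with cf_seq (N A : finType) (P : seq (N * seq (N + A)%type))
  : seq (N + A)%type -> seq A -> Prop :=
| cf_nil : cf_seq P [::] [::]
| cf_cons s rhs u v : cf_sym P s u -> cf_seq P rhs v -> cf_seq P (s :: rhs) (u ++ v).

Definition context_free (A : finType) (L : seq A -> Prop) : Prop :=
  exists (N : finType) (S : N) (P : seq (N * seq (N + A)%type)),
    forall w, L w <-> cf_sym P (inl S) w.

(* Main.v *)
From Stdlib Require Import ClassicalEpsilon.
Require Import Defs.
From HB Require Import structures.
From mathcomp Require Import all_boot all_order all_algebra.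
Set Implicit Arguments. Unset Strict Implicit. Unset Printing Implicit Defensive.
Import GRing.Theory.

Section Red.
Variable n : nat.

Fixpoint red (s : seq 'I_n) (w : seq (paren n)) : option (seq 'I_n) :=
  match w with
  | [::] => Some s
  | p :: w' => if p.2 then red (p.1 :: s) w'
              else match s with
                   | j :: s' => if p.1 == j then red s' w' else None
                   | [::] => None end
  end.

Lemma red_cat s u v : red s (u ++ v) = obind (fun s' => red s' v) (red s u).
Proof.
elim: u s => [|[i b] u IH] s //=.
case: b => //; case: s => // j s; by case: eqP.
Qed.

Lemma dyck_red w : dyck w -> forall s, red s w = Some s.
Proof.
elim => //= [i w' _ IH|u v _ IHu _ IHv] s.
  by rewrite -cats1 red_cat IH /= eqxx.
by rewrite red_cat IHu /= IHv.
Qed.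

Fixpoint closes (s : seq 'I_n) (w : seq (paren n)) : Prop :=
  match s with
  | [::] => dyck w
  | i :: s' => exists d r, dyck d /\ w = d ++ (i, false) :: r /\ closes s' r
  end.

Lemma closes_pre s e r : dyck e -> closes s r -> closes s (e ++ r).
Proof.
case: s => [|i s] /= He.
  by move=> Hr; apply: dyck_cat.
move=> [d [r' [Hd [-> Hc]]]]; exists (e ++ d), r'; split => //.
  by apply: dyck_cat.
by rewrite catA.
Qed.

Lemma red_closes w : forall s, red s w = Some [::] -> closes s w.
Proof.
elim: w => [|[i b] w IH] s /=.
  by case=> ->; apply: dyck_nil.
case: b.
  move=> /IH /= [d [r [Hd [-> Hc]]]].
  have := closes_pre (dyck_wrap i Hd) Hc.
  by rewrite -cats1 /= -catA.
case: s => // j s; case: eqP => // -> /IH Hc.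
by exists [::], w; split => //; apply: dyck_nil.
Qed.

Lemma red_dyck w : red [::] w = Some [::] -> dyck w.
Proof. by move/red_closes. Qed.

Lemma dyckE w : dyck w <-> red [::] w = Some [::].
Proof. split; [by move/dyck_red; apply | exact: red_dyck]. Qed.

End Red.


Section Codes.
Variable n : nat.
Variables i0 i1 : 'I_n.
Hypothesis hneq : i0 != i1.
Variable X : finType.

Definition code (x : X) : seq 'I_n := nseq (enum_rank x) i0 ++ [:: i1].
Definition enc (x : X) : seq (paren n) := (i1, true) :: nseq (enum_rank x) (i0, true).
Definition dec (x : X) : seq (paren n) := nseq (enum_rank x) (i0, false) ++ [:: (i1, false)].
Definition enc_stack (stk : seq X) := flatten (map code stk).

Lemma red_push_nseq k t : red t (nseq k (i0, true)) = Some (nseq k i0 ++ t).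
Proof.
elim: k t => [|k IH] t //=; rewrite IH; congr Some.
by elim: k {IH} => //= k ->.
Qed.

Lemma red_enc s x : red s (enc x) = Some (code x ++ s).
Proof. by rewrite /= red_push_nseq /code -catA. Qed.

Lemma red_dec_gen k k' s s' :
  red (nseq k i0 ++ i1 :: s) (nseq k' (i0, false) ++ [:: (i1, false)]) = Some s' ->
  k = k' /\ s' = s.
Proof.
elim: k' k => [|k' IH] [|k] /=.
- by rewrite eqxx => -[].
- by rewrite eq_sym (negbTE hneq).
- by rewrite (negbTE hneq).
- by rewrite eqxx => /IH [-> ->].
Qed.

Lemma red_dec s x : red (code x ++ s) (dec x) = Some s.
Proof.
rewrite /code /dec -catA /=; elim: (nat_of_ord (enum_rank x)) => /= [|k ->].
  by rewrite eqxx.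
by rewrite eqxx.
Qed.

Lemma red_dec_inv x y s s' : red (code x ++ s) (dec y) = Some s' -> x = y /\ s' = s.
Proof.
rewrite /code /dec -catA /= => /red_dec_gen [Hk ->]; split => //.
by apply: enum_rank_inj; apply: val_inj.
Qed.

Lemma red_dec_nil y : red [::] (dec y) = None.
Proof. by rewrite /dec; case: (nat_of_ord (enum_rank y)). Qed.

Lemma enc_stack_nil stk : enc_stack stk = [::] -> stk = [::].
Proof. case: stk => //= x stk; rewrite /enc_stack /= /code -catA. by case: (nseq (enum_rank x) i0). Qed.

Lemma red_pop stk y s' : red (enc_stack stk) (dec y) = Some s' ->
  exists stk', stk = y :: stk' /\ s' = enc_stack stk'.
Proof.
case: stk => [|x stk] /=; first by rewrite red_dec_nil.
by move/red_dec_inv => [-> ->]; exists stk.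
Qed.

End Codes.


Scheme cf_sym_mind := Induction for cf_sym Sort Prop
  with cf_seq_mind := Induction for cf_seq Sort Prop.
Combined Scheme cf_mutind from cf_sym_mind, cf_seq_mind.

Section Gram.
Variables N A : finType.
Variable P : seq (N * seq (N + A)%type).
Local Notation Sym := (N + A)%type.

Lemma cf_seq_cat a1 a2 w1 w2 : cf_seq P a1 w1 -> cf_seq P a2 w2 -> cf_seq P (a1 ++ a2) (w1 ++ w2).
Proof.
elim => //= s rhs u v Hs _ IH H2; rewrite -catA; apply: cf_cons => //; exact: IH.
Qed.

Lemma cf_seq1 s w : cf_seq P [:: s] w <-> cf_sym P s w.
Proof.
split.
  move=> H; inversion H; subst. inversion H4; subst. by rewrite cats0.
move=> H; rewrite -[w]cats0; apply: cf_cons => //; exact: cf_nil.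
Qed.

Inductive lc (X : N) : Sym -> seq A -> Prop :=
| lc_refl : lc X (inl X) [::]
| lc_step Z al T be v u : (Z, al ++ T :: be) \in P -> cf_seq P al [::] ->
    cf_seq P be v -> lc X (inl Z) u -> lc X T (v ++ u).

Lemma lc_trans X Y T u v : lc Y T u -> lc X (inl Y) v -> lc X T (u ++ v).
Proof.
elim => // Z al T' be v' u' Hin Hal Hbe _ IH H; rewrite -catA.
by apply: lc_step Hin Hal Hbe (IH H).
Qed.

Lemma lc_sound X T u : lc X T u -> forall t, cf_sym P T t -> cf_sym P (inl X) (t ++ u).
Proof.
elim => [|Z al T' be v u' Hin Hal Hbe _ IH] t Ht; first by rewrite cats0.
rewrite catA; apply: IH; apply: cf_nonterm Hin _.
rewrite -[t ++ v]cat0s; apply: cf_seq_cat => //.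
exact: cf_cons.
Qed.

Definition firstP (s : Sym) a u :=
  (s = inr a /\ u = [::]) \/ (exists Y, s = inl Y /\ lc Y (inr a) u).

Lemma first_letter :
  (forall s w, cf_sym P s w -> forall a w', w = a :: w' -> firstP s a w') /\
  (forall g w, cf_seq P g w -> forall a w', w = a :: w' ->
     exists al s be u v, g = al ++ s :: be /\ cf_seq P al [::] /\ firstP s a u /\
        cf_seq P be v /\ w' = u ++ v).
Proof.
apply: (@cf_mutind N A P (fun s w _ => forall a w', w = a :: w' -> firstP s a w')
   (fun g w _ => forall a w', w = a :: w' ->
     exists al s be u v, g = al ++ s :: be /\ cf_seq P al [::] /\ firstP s a u /\
        cf_seq P be v /\ w' = u ++ v)).
- by move=> a0 a w' [<- <-]; left.
- move=> X rhs w Hin Hseq IH a w' Hw.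
  have [al [s [be [u [v [Hr [Hal [Hf [Hbe ->]]]]]]]]] := IH a w' Hw.
  rewrite Hr in Hin; right; exists X; case: Hf => [[Hs ->]|[Y [Hs HY]]]; subst s.
    by rewrite /= -[v]cats0; split => //; apply: lc_step Hin Hal Hbe (lc_refl _).
  split => //; apply: lc_trans HY _; rewrite -[v]cats0; apply: lc_step Hin Hal Hbe (lc_refl _).
- by [].
- move=> s rhs u v Hs IH1 Hr IH2 a w'; case: u Hs IH1 => [|a' u'] Hs IH1 /= Hw.
    have [al [s' [be [u [v' [-> [Hal [Hf [Hbe ->]]]]]]]]] := IH2 a w' Hw.
    exists (s :: al), s', be, u, v'; do !split => //.
    rewrite -[[::]]/([::] ++ [::]); exact: cf_cons.
  case: Hw => <- <-; exists [::], s, rhs, u', v; do !split => //.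
    exact: cf_nil.
  exact: IH1.
Qed.


Definition task := (seq Sym + (N * Sym))%type.

Definition consume (T : task) (w : seq A) : Prop :=
  match T with
  | inl g => cf_seq P g w
  | inr (X, s) => lc X s w
  end.

Inductive cons_all : seq task -> seq A -> Prop :=
| ca_nil : cons_all [::] [::]
| ca_cons T ts u v : consume T u -> cons_all ts v -> cons_all (T :: ts) (u ++ v).

Lemma cons_all_cat t1 t2 w1 w2 : cons_all t1 w1 -> cons_all t2 w2 -> cons_all (t1 ++ t2) (w1 ++ w2).
Proof.
elim => //= T ts u v HT _ IH H2; rewrite -catA; apply: ca_cons => //; exact: IH.
Qed.

Lemma cons_all_split t1 t2 w : cons_all (t1 ++ t2) w ->
  exists w1 w2, w = w1 ++ w2 /\ cons_all t1 w1 /\ cons_all t2 w2.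
Proof.
elim: t1 w => [|T t1 IH] w /=.
  by move=> H; exists [::], w; split => //; split => //; exact: ca_nil.
move=> H; inversion H; subst.
have [w1 [w2 [-> [Hw1 Hw2]]]] := IH _ H4.
exists (u ++ w1), w2; split; first by rewrite catA.
by split => //; apply: ca_cons.
Qed.

Lemma cons_all1 T w : cons_all [:: T] w <-> consume T w.
Proof.
split.
  move=> H; inversion H; subst; inversion H4; subst; by rewrite cats0.
by move=> H; rewrite -[w]cats0; apply: ca_cons => //; exact: ca_nil.
Qed.

Definition outSeq (g : seq Sym) (a : A) (tau : seq task) : Prop :=
  exists al s be, g = al ++ s :: be /\ cf_seq P al [::] /\
    ((s = inr a /\ tau = [:: inl be]) \/
     (exists Y, s = inl Y /\ tau = [:: inr (Y, inr a); inl be])).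

Inductive U : Sym -> Sym -> Prop :=
| U_refl s : U s s
| U_step s Z al be s' : (Z, al ++ s :: be) \in P -> cf_seq P al [::] -> cf_seq P be [::] ->
    U (inl Z) s' -> U s s'.

Definition outT (T : task) (a : A) (tau : seq task) : Prop :=
  match T with
  | inl g => outSeq g a tau
  | inr (X, s) => exists s' Z al be tau0, U s s' /\ (Z, al ++ s' :: be) \in P /\
      cf_seq P al [::] /\ outSeq be a tau0 /\ tau = rcons tau0 (inr (X, inl Z))
  end.

Lemma outSeq_complete g a rest : cf_seq P g (a :: rest) ->
  exists tau, outSeq g a tau /\ cons_all tau rest.
Proof.
move=> H; have [al [s [be [u [v [-> [Hal [Hf [Hbe ->]]]]]]]]] := (proj2 first_letter) _ _ H a rest erefl.
case: Hf => [[-> ->]|[Y [-> HY]]].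
  exists [:: inl be]; split; first by exists al, (inr a), be; do !split => //; left.
  by apply/cons_all1.
exists [:: inr (Y, inr a); inl be]; split.
  by exists al, (inl Y), be; do !split => //; right; exists Y.
by apply: ca_cons => //; apply/cons_all1.
Qed.

Lemma outSeq_sound g a tau rest : outSeq g a tau -> cons_all tau rest -> cf_seq P g (a :: rest).
Proof.
move=> [al [s [be [-> [Hal Hc]]]]] Hca; rewrite -[a :: rest]cat0s; apply: cf_seq_cat => //.
case: Hc => [[-> Ht]|[Y [-> Ht]]]; subst tau.
  move/cons_all1: Hca => Hbe; rewrite -[a :: rest]cat1s; exact: cf_cons (cf_term _ a) Hbe.
inversion Hca; subst; move/cons_all1: H3 => Hbe.
rewrite -cat_cons; apply: cf_cons Hbe.
rewrite -[a :: u]cat1s; apply: lc_sound H1 _ _; exact: cf_term.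
Qed.

Lemma U_lc X s s' w : U s s' -> lc X s' w -> lc X s w.
Proof.
elim => // s0 Z al be s1 Hin Hal Hbe _ IH H.
rewrite -[w]cat0s; apply: lc_step Hin Hal Hbe (IH H).
Qed.

Lemma outT_complete T a rest : consume T (a :: rest) ->
  exists tau, outT T a tau /\ cons_all tau rest.
Proof.
case: T => [g|[X s]] /=; first exact: outSeq_complete.
move: {1 3}(a :: rest) (erefl (a :: rest)) => w Hw H.
elim: H a rest Hw => // Z al T be v u Hin Hal Hbe Hlc IH a rest.
case: v Hbe => [|a' v'] Hbe /= Hw.
  have [tau [[s' [Z' [al' [be' [tau0 [HU [Hin' [Hal' [Ho ->]]]]]]]]] Hc]] := IH a rest Hw.
  exists (rcons tau0 (inr (X, inl Z'))); split => //.
  exists s', Z', al', be', tau0; do !split => //.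
  exact: U_step Hin Hal Hbe HU.
case: Hw => <- <-.
have [tau0 [Ho Hc]] := outSeq_complete Hbe.
exists (rcons tau0 (inr (X, inl Z))); split.
  exists T, Z, al, be, tau0; do !split => //; exact: U_refl.
by rewrite -cats1; apply: cons_all_cat => //; apply/cons_all1.
Qed.

Lemma outT_sound T a tau rest : outT T a tau -> cons_all tau rest -> consume T (a :: rest).
Proof.
case: T => [g|[X s]] /=; first exact: outSeq_sound.
move=> [s' [Z [al [be [tau0 [HU [Hin [Hal [Ho ->]]]]]]]]].
rewrite -cats1 => /cons_all_split [w1 [w2 [-> [H1 /cons_all1 H2]]]].
apply: U_lc HU _; rewrite -cat_cons; apply: lc_step Hin Hal _ H2.
exact: outSeq_sound Ho H1.
Qed.

Lemma outSeq_size g a tau : outSeq g a tau -> (size tau <= 2)%N.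
Proof. by move=> [al [s [be [_ [_ [[_ ->]|[Y [_ ->]]]]]]]]. Qed.

Lemma outT_size T a tau : outT T a tau -> (size tau <= 3)%N.
Proof.
case: T => [g|[X s]] /=; first by move/outSeq_size => H; apply: leq_trans H _.
by move=> [s' [Z [al [be [tau0 [_ [_ [_ [/outSeq_size Ho ->]]]]]]]]]; rewrite size_rcons.
Qed.

Inductive dn : seq task -> seq task -> Prop :=
| dn_nil : dn [::] [::]
| dn_keep T t t' : dn t t' -> dn (T :: t) (T :: t')
| dn_drop T t t' : consume T [::] -> dn t t' -> dn (T :: t) t'.

Inductive cons_ne : seq task -> seq A -> Prop :=
| cne_nil : cons_ne [::] [::]
| cne_cons T ts u v : u <> [::] -> consume T u -> cons_ne ts v -> cons_ne (T :: ts) (u ++ v).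

Lemma cons_ne_all t w : cons_ne t w -> cons_all t w.
Proof. elim => [|T ts u v _ H _ IH]; [exact: ca_nil | exact: ca_cons]. Qed.

Lemma cons_ne_cat t1 t2 w1 w2 : cons_ne t1 w1 -> cons_ne t2 w2 -> cons_ne (t1 ++ t2) (w1 ++ w2).
Proof.
elim => //= T ts u v Hu HT _ IH H2; rewrite -catA; apply: cne_cons => //; exact: IH.
Qed.

Lemma dn_sound t t' w : dn t t' -> cons_all t' w -> cons_all t w.
Proof.
move=> H; elim: H w => [|T t0 t0' _ IH|T t0 t0' HT _ IH] w Hw //.
  inversion Hw; subst; apply: ca_cons => //; exact: IH.
rewrite -[w]cat0s; apply: ca_cons => //; exact: IH.
Qed.

Lemma dn_complete t w : cons_all t w -> exists t', dn t t' /\ cons_ne t' w.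
Proof.
elim => [|T ts u v HT _ [t' [Hd Hc]]].
  by exists [::]; split; [exact: dn_nil | exact: cne_nil].
case: u HT => [|a u] HT.
  by exists t'; split => //; apply: dn_drop.
by exists (T :: t'); split; [apply: dn_keep | apply: cne_cons].
Qed.

Lemma dn_size t t' : dn t t' -> (size t' <= size t)%N.
Proof. elim => [|T t0 t0' _ IH|T t0 t0' _ _ IH] //=; exact: leq_trans IH (leqnSn _). Qed.

Lemma dn_sub t t' : dn t t' -> forall q, q \in t' -> q \in t.
Proof.
elim => [|T t0 t0' _ IH|T t0 t0' _ _ IH] q //.
  by rewrite !inE => /orP [->|/IH ->] //; rewrite orbT.
by move/IH; rewrite inE => ->; rewrite orbT.
Qed.

End Gram.


Section Suf.
Variables N A : finType.
Variable P : seq (N * seq (N + A)%type).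
Variable S0 : N.
Local Notation Sym := (N + A)%type.

Definition allsuf (r : seq Sym) := [seq drop k r | k <- iota 0 (size r).+1].
Definition base := [:: inl S0] :: map snd P.
Definition suffs := flatten [seq allsuf r | r <- base].
Definition Sset : seq (task N A) := map inl suffs ++ map inr (enum (@predT (N * Sym)%type)).

Lemma mem_allsuf g r : g \in allsuf r <-> exists al, r = al ++ g.
Proof.
split.
  by move/mapP => [k _ ->]; exists (take k r); rewrite cat_take_drop.
move=> [al ->]; apply/mapP; exists (size al); last by rewrite drop_size_cat.
by rewrite mem_iota /= add0n size_cat ltnS leq_addr.
Qed.

Lemma mem_suffs g : g \in suffs <-> exists r, r \in base /\ exists al, r = al ++ g.
Proof.
split.
  by move/flatten_mapP => [r Hr /mem_allsuf Hg]; exists r.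
by move=> [r [Hr Hg]]; apply/flatten_mapP; exists r => //; apply/mem_allsuf.
Qed.

Lemma suffs_suf g al be : g \in suffs -> g = al ++ be -> be \in suffs.
Proof.
move/mem_suffs => [r [Hr [al0 Hr']]] Hg; subst g; apply/mem_suffs; exists r; split => //.
by exists (al0 ++ al); rewrite Hr' catA.
Qed.

Lemma rule_suffs Z r : (Z, r) \in P -> r \in suffs.
Proof.
move=> H; apply/mem_suffs; exists r; split; last by exists [::].
by rewrite inE; apply/orP; right; apply/mapP; exists (Z, r).
Qed.

Lemma start_suffs : [:: inl S0] \in suffs.
Proof. by apply/mem_suffs; exists [:: inl S0]; split; [rewrite inE eqxx | exists [::]]. Qed.

Lemma nil_suffs : [::] \in suffs.
Proof. by apply: (suffs_suf start_suffs (al := [:: inl S0])); rewrite cats0. Qed.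

Lemma inr_Sset q : inr q \in Sset.
Proof. by rewrite mem_cat; apply/orP; right; apply/mapP; exists q => //; rewrite mem_enum. Qed.

Lemma inl_Sset g : (inl g \in Sset) = (g \in suffs).
Proof.
rewrite mem_cat; apply/orP/idP => [[/mapP [g' H [->]] //|/mapP [q _] //]|H].
by left; apply/mapP; exists g.
Qed.

Lemma outSeq_closed g a tau : g \in suffs -> outSeq P g a tau -> forall q, q \in tau -> q \in Sset.
Proof.
move=> Hg [al [s [be [Hge [_ Hc]]]]] q.
have Hbe : be \in suffs by apply: (@suffs_suf g (al ++ [:: s])) => //; rewrite -catA.
case: Hc => [[_ ->]|[Y [_ ->]]].
  by rewrite mem_seq1 => /eqP ->; rewrite inl_Sset.
by rewrite in_cons mem_seq1 => /orP [/eqP ->|/eqP ->]; rewrite ?inr_Sset ?inl_Sset.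
Qed.

Lemma outT_closed t a tau : t \in Sset -> outT P t a tau -> forall q, q \in tau -> q \in Sset.
Proof.
case: t => [g|[X s]] /=.
  by rewrite inl_Sset; apply: outSeq_closed.
move=> _ [s' [Z [al [be [tau0 [_ [Hin [_ [Ho ->]]]]]]]]] q.
rewrite -cats1 mem_cat => /orP [|]; last by rewrite mem_seq1 => /eqP ->; rewrite inr_Sset.
apply: (outSeq_closed _ Ho).
by apply: (@suffs_suf _ (al ++ [:: s'])) (rule_suffs Hin) _; rewrite -catA.
Qed.

End Suf.

Local Open Scope ring_scope.

Definition cb (Q : Prop) : bool := if excluded_middle_informative Q then true else false.
Lemma cbP Q : reflect Q (cb Q).
Proof. by rewrite /cb; case: excluded_middle_informative => H; constructor. Qed.

Section Semi.
Variables (R : pzSemiRingType) (B : lSemiModType R) (b1 : B).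
Hypothesis hprime : forall c1 c2 : B, sle b1 (c1 + c2) -> sle b1 c1 \/ sle b1 c2.
Hypothesis hnz : ~ sle b1 0.

Lemma sle_addl c d : sle b1 c -> sle b1 (c + d).
Proof. by rewrite /sle => H; rewrite addrA H. Qed.
Lemma sle_addr c d : sle b1 d -> sle b1 (c + d).
Proof. by rewrite addrC; apply: sle_addl. Qed.

Lemma sle_sum (I : eqType) (r : seq I) (Pr : pred I) (F : I -> B) :
  sle b1 (\sum_(i <- r | Pr i) F i) <-> exists i, i \in r /\ Pr i /\ sle b1 (F i).
Proof.
elim: r => [|i r IH].
  by rewrite big_nil; split => // [[i []]].
rewrite big_cons; case: ifP => Hi.
  split.
    move/hprime => [H|/IH [j [Hj [Pj Hs]]]].
      by exists i; rewrite inE eqxx.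
    by exists j; rewrite inE Hj orbT.
  move=> [j [Hj [Pj Hs]]]; move: Hj; rewrite inE => /orP [/eqP Ej|Hj].
    by subst j; apply: sle_addl.
  by apply: sle_addr; apply/IH; exists j.
split.
  by move/IH => [j [Hj [Pj Hs]]]; exists j; rewrite inE Hj orbT.
move=> [j [Hj [Pj Hs]]]; move: Hj; rewrite inE => /orP [/eqP Ej|Hj].
  by subst j; rewrite Hi in Pj.
by apply/IH; exists j.
Qed.

Lemma sle_sumf (I : finType) (Pr : pred I) (F : I -> B) :
  sle b1 (\sum_(i | Pr i) F i) <-> exists i, Pr i /\ sle b1 (F i).
Proof.
split.
  by move/sle_sum => [i [_ H]]; exists i.
by move=> [i H]; apply/sle_sum; exists i; rewrite mem_index_enum.
Qed.

End Semi.


Section Main.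
Variables (R : pzSemiRingType) (B : lSemiModType R) (n : nat).
Hypothesis hn : (2 <= n)%N.
Variable alpha : seq (paren n) -> R.
Hypothesis halpha : monoid_morph alpha.
Variables b0 b1 : B.
Hypothesis hD : forall w : seq (paren n), sle b1 (alpha w *: b0) <-> dyck w.
Hypothesis hprime : forall c1 c2 : B, sle b1 (c1 + c2) -> sle b1 c1 \/ sle b1 c2.
Variables N A : finType.
Variable P : seq (N * seq (N + A)%type).
Variable S0 : N.

Definition i0 : 'I_n := @Ordinal n 0 (leq_trans (isT : (1 <= 2)%N) hn).
Definition i1 : 'I_n := Ordinal hn.
Lemma hneq : i0 != i1. Proof. by []. Qed.

Lemma hnz : ~ sle b1 0.
Proof.
rewrite /sle addr0 => Hb.
have : sle b1 (alpha [:: (i0, true)] *: b0) by rewrite /sle Hb add0r.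
by move/hD/dyckE.
Qed.

Definition X := seq_sub (Sset P S0).
Lemma start_in : (inl [:: inl S0] : task N A) \in Sset P S0.
Proof. by rewrite inl_Sset start_suffs. Qed.
Definition x0 : X := SeqSub start_in.
Definition tox (q : task N A) : X := insubd x0 q.
Lemma toxK q : q \in Sset P S0 -> val (tox q) = q.
Proof. exact: insubdK. Qed.
Definition Done := tox (inl [::]).
Lemma DoneE : val Done = inl [::].
Proof. by rewrite toxK // inl_Sset nil_suffs. Qed.

Definition Lab := (option X * option X * option X)%type.
Definition opt (p : option X) : seq X := if p is Some q then [:: q] else [::].
Definition lw (l : Lab) : seq (paren n) :=
  let: (po, p2, p1) := l in
  (if po is Some y then dec i0 i1 y else [::]) ++
  (if p2 is Some q then enc i0 i1 q else [::]) ++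
  (if p1 is Some q then enc i0 i1 q else [::]).

Definition valid (a : A) (x : X) (l : Lab) (y : X) : Prop :=
  let: (po, p2, p1) := l in
  exists tau tau', outT P (val x) a tau /\ dn P tau tau' /\
   ((po = None /\ tau' = map val (y :: opt p1 ++ opt p2)) \/
    (po = Some y /\ p1 = None /\ p2 = None /\ tau' = [::]) \/
    (po = None /\ p1 = None /\ p2 = None /\ tau' = [::] /\ val y = inl [::])).

Definition fin (x : X) : Prop := consume P (val x) [::].

Definition tr (a : A) (x y : X) : R := \sum_(l : Lab | cb (valid a x l y)) alpha (lw l).
Definition out (x : X) : B := if cb (fin x) then b0 else 0.

Fixpoint accepts (u : seq (paren n)) (x : X) (w : seq A) : Prop :=
  match w with
  | [::] => fin x /\ dyck u
  | a :: w' => exists l y, valid a x l y /\ accepts (u ++ lw l) y w'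
  end.

Lemma step1 w : forall u x, sle b1 (alpha u *: wsem out tr x w) <-> accepts u x w.
Proof.
elim: w => [|a w IH] u x /=.
  rewrite /out; case: cbP => Hf.
    by rewrite hD; split => [H|[_ H]].
  by rewrite scaler0; split => [/hnz|[]].
rewrite scaler_sumr.
have E : forall y, alpha u *: (tr a x y *: wsem out tr y w) =
   \sum_(l : Lab | cb (valid a x l y)) alpha (u ++ lw l) *: wsem out tr y w.
  move=> y; rewrite /tr scaler_suml scaler_sumr; apply: eq_bigr => l _.
  by rewrite scalerA (proj2 halpha).
under eq_bigr => y _ do rewrite E.
split.
  move/(sle_sumf hprime hnz) => [y [_ /(sle_sumf hprime hnz) [l [/cbP Hv /IH Ha]]]].
  by exists l, y.
move=> [l [y [Hv Ha]]]; apply/(sle_sumf hprime hnz); exists y; split => //.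
by apply/(sle_sumf hprime hnz); exists l; split; [apply/cbP | apply/IH].
Qed.


Local Notation es := (enc_stack i0 i1).
Arguments enc : simpl never.
Arguments dec : simpl never.
Arguments code : simpl never.

Lemma es_cat (s1 s2 : seq X) : es (s1 ++ s2) = es s1 ++ es s2.
Proof. by rewrite /enc_stack map_cat flatten_cat. Qed.

Lemma red_cat_some (s : seq 'I_n) u v s' : red s u = Some s' -> red s (u ++ v) = red s' v.
Proof. by move=> H; rewrite red_cat H. Qed.

Lemma red_lw_push s p1 p2 : red s (lw (None, p2, p1)) = Some (es (opt p1 ++ opt p2) ++ s).
Proof.
rewrite /lw cat0s.
case: p1 => [q1|]; case: p2 => [q2|].
- by rewrite (red_cat_some _ (red_enc _ _ _ _)) red_enc /enc_stack /= cats0 catA.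
- by rewrite red_enc /enc_stack /= cats0.
- by rewrite cats0 red_enc /enc_stack /= cats0.
- by [].
Qed.

Lemma accepts_pref w : forall u x, accepts u x w -> exists v, dyck (u ++ v).
Proof.
elim: w => [|a w IH] u x /=.
  by move=> [_ H]; exists [::]; rewrite cats0.
move=> [l [y [_ /IH [v Hv]]]]; exists (lw l ++ v); by rewrite catA.
Qed.

Lemma no_out_nil a tau : ~ outT P (inl [::]) a tau.
Proof. by move=> [al [s [be [/(congr1 size) + _]]]]; rewrite size_cat /= addnS. Qed.

Lemma sound w : forall u x stk, accepts u x w -> red [::] u = Some (es stk) ->
  cons_all P (map val (x :: stk)) w.
Proof.
elim: w => [|a w IH] u x stk /=.
  move=> [Hf /dyckE Hd]; rewrite Hd => -[] /esym /enc_stack_nil ->.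
  by apply/cons_all1.
move=> [[[po p2] p1] [y [[tau [tau' [Ho [Hdn Hc]]]] Ha]]] Hr.
case: Hc => [[Hpo Ht]|[[Hpo [Hp1 [Hp2 Ht]]]|[Hpo [Hp1 [Hp2 [Ht Hy]]]]]]; subst.
- have Hr' : red [::] (u ++ lw (None, p2, p1)) = Some (es (opt p1 ++ opt p2 ++ stk)).
    by rewrite (red_cat_some _ Hr) red_lw_push !es_cat catA.
  have := IH _ _ _ Ha Hr'.
  rewrite catA -cat_cons map_cat.
  move/cons_all_split => [w1 [w2 [-> [H1 H2]]]].
  rewrite -cat_cons; apply: ca_cons H2.
  exact: outT_sound Ho (dn_sound Hdn H1).
- have [v Hv] := accepts_pref Ha.
  have := dyck_red Hv [::]; rewrite -catA (red_cat_some _ Hr) /lw /= !cats0 red_cat.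
  case E: (red (es stk) (dec i0 i1 y)) => [s'|] //= _.
  have [stk' [Hs Hs']] := red_pop hneq E; subst stk s'.
  have Hr' : red [::] (u ++ lw (Some y, None, None)) = Some (es stk').
    by rewrite (red_cat_some _ Hr) /lw /= !cats0 E.
  have := IH _ _ _ Ha Hr'.
  rewrite -[a :: w]cat1s; apply: ca_cons.
  apply: (outT_sound Ho); apply: (dn_sound Hdn); exact: ca_nil.
- case: w IH Ha => [|a' w'] IH Ha /=.
    move: Ha => [_ /dyckE]; rewrite /= cats0 Hr => -[] /enc_stack_nil ->.
    by apply/cons_all1; apply: (outT_sound Ho); apply: (dn_sound Hdn); exact: ca_nil.
  by move: Ha => [[[po' p2'] p1'] [y' [[tau0 [_ [/= +]]] _]]]; rewrite Hy => /no_out_nil.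
Qed.


Definition Inv (x : X) (stk : seq X) (w : seq A) :=
  (w = [::] /\ consume P (val x) [::] /\ stk = [::]) \/ cons_ne P (map val (x :: stk)) w.

Lemma opt_split (ps : seq X) : (size ps <= 2)%N -> exists p1 p2, ps = opt p1 ++ opt p2.
Proof.
case: ps => [|q1 [|q2 [|q3 ps]]] // _.
- by exists None, None.
- by exists (Some q1), None.
- by exists (Some q1), (Some q2).
Qed.

Lemma cons_ne_inv T ts w : cons_ne P (T :: ts) w ->
  exists u v, u <> [::] /\ consume P T u /\ cons_ne P ts v /\ w = u ++ v.
Proof. by move=> H; inversion H; subst; exists u, v. Qed.

Lemma cons_ne_nil' ts w : cons_ne P ts w -> ts = [::] -> w = [::].
Proof. by case. Qed.

Lemma complete w : forall u x stk, Inv x stk w -> red [::] u = Some (es stk) -> accepts u x w.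
Proof.
elim: w => [|a w IH] u x stk.
  move=> [[_ [Hf ->]]|Hne] Hr /=.
    by split => //; apply/dyckE; rewrite Hr.
  by have [[|? ?] [v [Hu [_ [_ /esym /eqP]]]]] := cons_ne_inv Hne.
move=> [[//]|Hne] Hr.
have [u0 [v0 [Hu0 [Hx [Hstk Hw]]]]] := cons_ne_inv Hne.
case: u0 Hu0 Hx Hw => [[]//|a' u1] _ Hx [Ea Ew]; subst a' w.
have [tau [Ho Hc]] := outT_complete Hx.
have [tau' [Hdn Hne']] := dn_complete Hc.
have Hmem : forall q, q \in tau' -> q \in Sset P S0.
  by move=> q /(dn_sub Hdn); apply: (outT_closed (valP x) Ho).
case: tau' Hdn Hne' Hmem => [|q ps] Hdn Hne' Hmem.
  have Hu1 := cons_ne_nil' Hne' erefl; subst u1.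
  clear Hne; case: stk Hr Hstk => [|y stk'] Hr Hstk.
    rewrite (cons_ne_nil' Hstk erefl).
    exists (None, None, None), Done; split.
      exists tau, [::]; do !split => //; right; right; do !split => //; exact: DoneE.
    split; first by rewrite /fin DoneE; exact: cf_nil.
    by apply/dyckE; rewrite cats0 Hr.
  exists (Some y, None, None), y; split.
    by exists tau, [::]; do !split => //; right; left.
  apply: (IH _ _ stk'); first by right.
  by rewrite (red_cat_some _ Hr) /lw /= !cats0 red_dec.
have Hsz : (size ps <= 2)%N.
  by have := leq_trans (dn_size Hdn) (outT_size Ho).
have Hsz' : (size (map tox ps) <= 2)%N by rewrite size_map.
have [p1 [p2 Hps]] := opt_split Hsz'.
have Hval : map val (tox q :: opt p1 ++ opt p2) = q :: ps.
  rewrite -Hps /= toxK ?Hmem ?mem_head //; congr cons.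
  rewrite -map_comp; apply: map_id_in => q' Hq' /=; apply: toxK; apply: Hmem.
  by rewrite in_cons Hq' orbT.
exists (None, p2, p1), (tox q); split.
  by exists tau, (q :: ps); do !split => //; left.
apply: (IH _ _ (opt p1 ++ opt p2 ++ stk)).
  right; rewrite catA -cat_cons map_cat Hval.
  exact: cons_ne_cat Hne' Hstk.
by rewrite (red_cat_some _ Hr) red_lw_push !es_cat catA.
Qed.

Lemma final_ex : exists (Xt : finType) (o : Xt -> B) (t : A -> Xt -> Xt -> R) (x0 : Xt),
  forall w, cf_sym P (inl S0) w <-> sle b1 (wsem o t x0 w).
Proof.
exists X, out, tr, x0 => w.
have H1 : sle b1 (wsem out tr x0 w) <-> accepts [::] x0 w.
  by rewrite -step1 (proj1 halpha) scale1r.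
rewrite H1 -cf_seq1; split.
  move=> Hw; apply: (complete (stk := [::])) => //.
  clear H1; case: w Hw => [|a w] Hw; first by left.
  right; rewrite /= -[a :: w]cats0; apply: cne_cons => //; exact: cne_nil.
by move/(sound (stk := [::])) => /(_ erefl) /cons_all1.
Qed.

End Main.

Theorem mainTheorem8
  (R : pzSemiRingType) (R0 : seq R)
  (hidem : idempotent_sr R) (hR0 : sr_fin_gen R0)
  (B : lSemiModType R) (B0 : seq B) (hB0 : smod_fin_gen B0)
  (n : nat) (hn : (2 <= n)%N)
  (alpha : seq (paren n) -> R) (halpha : monoid_morph alpha)
  (b0 b1 : B)
  (hD : forall w : seq (paren n), sle b1 (alpha w *: b0) <-> dyck w)
  (hprime : forall c1 c2 : B, sle b1 (c1 + c2) -> sle b1 c1 \/ sle b1 c2) :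
  forall (A : finType) (L : seq A -> Prop), context_free L ->
    exists (X : finType) (o : X -> B) (t : A -> X -> X -> R) (x0 : X),
      forall w : seq A, L w <-> sle b1 (wsem o t x0 w).
Proof.
move=> A L [N [S0 [P HL]]].
have [X [o [t [x0 H]]]] := final_ex hn halpha hD hprime P S0.
exists X, o, t, x0 => w.
by rewrite HL H.
Qed.
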